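(* Let $d,r:\mathbb{N}\to\mathbb{N}$ be functions such that $d$ is nondecreasing, takes only prime values at least $5$, $r$ is strictly increasing, and $3r(n)\le d(n)$ for all $n$. Let $\alpha_n=(1\;2\;\cdots\;d(n))$, $\beta_n=(1\;(1+r(n))\;(1+2r(n)))\in\mathrm{Alt}(d(n))$, $\alpha=(\alpha_n)_n$, $\beta=(\beta_n)_n\in\prod_n\mathrm{Alt}(d(n))$, and $G=\langle\alpha,\beta\rangle$. Let $L_\infty$ be the normal closure of $\beta$ in $G$. Then there is a surjective homomorphism $\tau:G\to W$ with $\tau(\alpha)=a$, $\tau(\beta)=b_0$; its kernel is $\ker\tau=\bigoplus_n\mathrm{Alt}(d(n))\le\prod_n\mathrm{Alt}(d(n))$ (in particular $\bigoplus_n\mathrm{Alt}(d(n))\le G$), and $\ker\tau\le L_\infty$.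
   Context: $\mathbb{N}=\{1,2,\dots\}$. $W=C_3\wr\mathbb{Z}=\bigoplus_{\mathbb{Z}}C_3\rtimes\mathbb{Z}$ (the lamplighter group), where $\mathbb{Z}=\langle a\rangle$ acts by shifting coordinates; $b_n$ generates the copy of $C_3$ at coordinate $n$, so $a^nb_ma^{-n}=b_{m+n}$. $\bigoplus_n\mathrm{Alt}(d(n))$ denotes the subgroup of the direct product consisting of elements with finitely many nontrivial coordinates. *)

(* Defs.v *)
From HB Require Import structures.
From mathcomp Require Import all_boot all_order all_algebra all_fingroup all_solvable alt.
Set Implicit Arguments. Unset Strict Implicit. Unset Printing Implicit Defensive.
Import GRing.Theory.

(* Index convention: the paper's index set is N = {1,2,...}; we index by
   nat = {0,1,...}, coordinate k standing for the paper's n = k+1.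
   Points {1,...,d} of Alt(d) are represented by 'I_d = {0,...,d-1}
   (point p is the ordinal p-1). *)

Definition Pt (d : nat -> nat) := forall n : nat, {perm 'I_(d n)}.
Definition Pmul (d : nat -> nat) (x y : Pt d) : Pt d := fun n => (x n * y n)%g.
Definition Pinv (d : nat -> nat) (x : Pt d) : Pt d := fun n => ((x n)^-1)%g.
Definition P1 (d : nat -> nat) : Pt d := fun n => 1%g.

Definition is_subgroup (d : nat -> nat) (S : Pt d -> Prop) : Prop :=
  [/\ S (P1 d), (forall x y, S x -> S y -> S (Pmul x y)) &
      (forall x, S x -> S (Pinv x))].

Definition gen (d : nat -> nat) (S0 : Pt d -> Prop) (x : Pt d) : Prop :=
  forall H : Pt d -> Prop, is_subgroup H -> (forall y, S0 y -> H y) -> H x.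

Definition in_dsumAlt (d : nat -> nat) (x : Pt d) : Prop :=
  (forall n, x n \in ('Alt_('I_(d n)))%g) /\
  (exists N : nat, forall n, N <= n -> x n = 1%g).

Definition cycle_perm (m : nat) : {perm 'I_m} := perm (@ordS_inj m).

(* the 3-cycle (a b c) on points given as 0-based nats (a |-> b |-> c |-> a);
   identity if some point is out of range (never the case below).
   In MathComp (s * t) x = t (s x). *)
Definition cyc3 (m a b c : nat) : {perm 'I_m} :=
  match (insub a : option 'I_m), (insub b : option 'I_m), (insub c : option 'I_m) with
  | Some a', Some b', Some c' => (tperm a' b' * tperm a' c')%g
  | _, _, _ => 1%g
  end.

Definition alpha (d : nat -> nat) : Pt d := fun n => cycle_perm (d n).
Definition beta (d r : nat -> nat) : Pt d :=
  fun n => cyc3 (d n) 0 (r n) (2 * r n).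

Arguments alpha : clear implicits.
Arguments beta : clear implicits.

Definition Ggen (d r : nat -> nat) : Pt d -> Prop :=
  gen (fun y => y = alpha d \/ y = beta d r).

Arguments Ggen : clear implicits.

Definition Linf (d r : nat -> nat) : Pt d -> Prop :=
  gen (fun y => exists g, Ggen d r g /\ y = Pmul (Pmul g (beta d r)) (Pinv g)).

Arguments Linf : clear implicits.

(* Lamplighter group W = C_3 wr Z.  An element (f, k) stands for
   (prod_i b_i^(f i)) a^k, with f finitely supported.  Using
   a^k b_m a^-k = b_(m+k), the product is
   (f, k)(g, l) = (i |-> f i + g (i - k), k + l). *)
Definition Wt := ((int -> 'Z_3) * int)%type.
Definition in_W (w : Wt) : Prop :=
  exists N : nat, forall i : int, (N < `|i|)%N -> w.1 i = 0%R.
Definition Wmul (x y : Wt) : Wt :=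
  (fun i => (x.1 i + y.1 (i - x.2)%R)%R, (x.2 + y.2)%R).
Definition W1 : Wt := (fun _ => 0%R, 0%R).
Definition Wa : Wt := (fun _ => 0%R, 1%R).
Definition Wb0 : Wt := (fun i => if i == 0%R then 1%R else 0%R, 0%R).

(* Main.v *)
From Stdlib Require Import FunctionalExtensionality ClassicalEpsilon.
Require Import Defs.
From HB Require Import structures.
From mathcomp Require Import all_boot all_order all_algebra all_fingroup all_solvable alt.
From mathcomp Require Import zify ring.
Set Implicit Arguments. Unset Strict Implicit. Unset Printing Implicit Defensive.
Import GRing.Theory Num.Theory.
Local Open Scope ring_scope.

Lemma modz_eq_small (x y m : int) : 0 < m -> (x %% m)%Z = (y %% m)%Z -> `|x - y| < m -> x = y.
Proof.
move=> m0 /eqP; rewrite eqz_mod_dvd dvdz_eq => /eqP E Hb.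
rewrite -E in Hb.
set q := ((x - y) %/ m)%Z in E Hb.
have : q = 0 by nia.
move=> q0; rewrite q0 mul0r in E; lia.
Qed.

Section Pts.
Variable m : nat.
Hypothesis m0 : (0 < m)%N.

Lemma pz_proof (z : int) : (absz (z %% m)%Z < m)%N.
Proof.
have h1 : 0 <= (z %% m%:Z)%Z by apply: modz_ge0; lia.
have h2 : (z %% m%:Z)%Z < m%:Z by apply: ltz_pmod; lia.
lia.
Qed.

Definition pz (z : int) : 'I_m := Ordinal (pz_proof z).

Lemma pzE z : ((pz z : nat) : int) = (z %% m)%Z.
Proof.
have h1 : 0 <= (z %% m%:Z)%Z by apply: modz_ge0; lia.
rewrite /= gez0_abs //.
Qed.

Lemma pz_eq x y : (pz x = pz y) <-> (x %% m)%Z = (y %% m)%Z.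
Proof.
split=> [E|E]; first by rewrite -!pzE E.
by apply: val_inj => /=; rewrite E.
Qed.

Lemma pz_val (p : 'I_m) : pz (p : nat)%:Z = p.
Proof.
apply: val_inj => /=; rewrite modz_nat; by rewrite modn_small.
Qed.

Lemma pz_pz x y : pz ((pz x : nat)%:Z + y) = pz (x + y).
Proof. by apply/pz_eq; rewrite pzE modzDml. Qed.

Lemma pz_add_eq x y z : pz x = pz y -> pz (x + z) = pz (y + z).
Proof. by move=> /pz_eq E; apply/pz_eq; rewrite -modzDml E modzDml. Qed.

Lemma pz_small x y : pz x = pz y -> `|x - y| < m%:Z -> x = y.
Proof. move/pz_eq => E H; apply: modz_eq_small E H; lia. Qed.

End Pts.

Section Blocks.
Variables (m r : nat).
Hypothesis m0 : (0 < m)%N.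

Definition Mw := (r.-1 %/ 4)%N.

Definition pt (i : int) (j : 'Z_3) : 'I_m := pz m0 (i + (j : nat)%:Z * r%:Z).

Lemma Z3_lt (j : 'Z_3) : (j < 3)%N.
Proof. by case: j. Qed.

Lemma pt_inj ii ii' j j' : (0 < r)%N -> (3 * r <= m)%N ->
  `|ii| <= (2 * Mw)%:Z -> `|ii'| <= (2 * Mw)%:Z -> pt ii j = pt ii' j' -> ii = ii' /\ j = j'.
Proof.
rewrite /pt /Mw => r0 r3 h1 h2 /pz_small E.
have hj := Z3_lt j; have hj' := Z3_lt j'.
have := E ltac:(nia).
move=> {}E.
have ejj : (j : nat) = j' by nia.
split; last exact: val_inj.
rewrite ejj in E; lia.
Qed.

Definition blk (p : 'I_m) : option (int * 'Z_3) :=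
  omap (fun ij : 'I_(2 * Mw).+1 * 'Z_3 => ((ij.1 : nat)%:Z - Mw%:Z, ij.2))
    [pick ij : 'I_(2 * Mw).+1 * 'Z_3 | pt ((ij.1 : nat)%:Z - Mw%:Z) ij.2 == p].

Variant blk_spec (p : 'I_m) : option (int * 'Z_3) -> Prop :=
| BlkSome ii j of `|ii| <= Mw%:Z & pt ii j = p : blk_spec p (Some (ii, j))
| BlkNone of (forall ii j, `|ii| <= Mw%:Z -> pt ii j != p) : blk_spec p None.

Lemma blkP p : blk_spec p (blk p).
Proof.
rewrite /blk; case: pickP => [[i j] /= /eqP E|H] /=.
  apply: BlkSome => //; have := ltn_ord i; lia.
apply: BlkNone => ii j hii; apply/negP => /eqP E.
have hi : (absz (ii + Mw%:Z)%R < (2 * Mw).+1)%N by lia.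
have := H (Ordinal hi, j); rewrite /= -E.
have -> : (absz (ii + Mw%:Z)%R)%:Z - Mw%:Z = ii by lia.
by rewrite eqxx.
Qed.

Lemma blk_pt ii j : (0 < r)%N -> (3 * r <= m)%N -> `|ii| <= Mw%:Z -> blk (pt ii j) = Some (ii, j).
Proof.
move=> r0 r3 hii; case: blkP => [ii' j' h' E|H].
  have [|| -> ->] := @pt_inj ii' ii j' j r0 r3 _ _ E; try done; lia.
by have := H ii j hii; rewrite eqxx.
Qed.

End Blocks.
Definition mkperm (T : finType) (F : T -> T) : {perm T} :=
  match injectiveP F with ReflectT H => perm H | ReflectF _ => 1%g end.

Lemma mkpermE (T : finType) (F : T -> T) : injective F -> forall x, mkperm F x = F x.
Proof.
rewrite /mkperm => Fi x; case: injectiveP => [H|H]; first by rewrite permE.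
by case: (H Fi).
Qed.

Section Rho.
Variables (m r : nat).
Hypothesis m0 : (0 < m)%N.

Local Notation pz := (pz m0).
Local Notation pt := (pt r m0).
Local Notation blk := (blk r m0).
Local Notation Mw := (Mw r).

Definition sh (p : 'I_m) (k : int) : 'I_m := pz ((p : nat)%:Z + k).

Lemma sh_pt ii j k : sh (pt ii j) k = pt (ii + k) j.
Proof. by rewrite /sh /pt pz_pz; congr pz; ring. Qed.

Lemma sh_sh p a b : sh (sh p a) b = sh p (a + b).
Proof. by rewrite /sh pz_pz addrA. Qed.

Lemma sh0 p : sh p 0 = p.
Proof. by rewrite /sh addr0 pz_val. Qed.

Lemma sh_inj p q k : sh p k = sh q k -> p = q.
Proof.
move=> E; rewrite -(sh0 p) -(sh0 q) -(subrr k) -!sh_sh E //.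
Qed.

Definition Rho (f : int -> 'Z_3) (k : int) (p : 'I_m) : 'I_m :=
  match blk p with
  | Some (ii, j) => sh (pt ii (j + f (- ii))) k
  | None => sh p k
  end.

Lemma Rho_pt f k ii j : (0 < r)%N -> (3 * r <= m)%N -> `|ii| <= Mw%:Z ->
  Rho f k (pt ii j) = sh (pt ii (j + f (- ii))) k.
Proof. by move=> r0 r3 h; rewrite /Rho blk_pt. Qed.

Lemma Rho_id p : Rho (fun _ => 0) 0 p = p.
Proof. by rewrite /Rho; case: blkP => [ii j _ E|_]; rewrite ?addr0 ?E sh0. Qed.

Lemma Rho_shift k p : Rho (fun _ => 0) k p = sh p k.
Proof. by rewrite /Rho; case: blkP => [ii j _ E|_]; rewrite ?addr0 ?E. Qed.

Lemma Rho_inj f k : (0 < r)%N -> (3 * r <= m)%N -> injective (Rho f k).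
Proof.
move=> r0 r3 p q; rewrite /Rho.
case: blkP => [ii j hi Ep|Hp]; case: blkP => [ii' j' hi' Eq|Hq] /sh_inj E.
- have [|| E1 E2] := pt_inj r0 r3 _ _ E; try lia.
  subst; move/addIr: E2 => ->; done.
- by have := Hq ii (j + f (- ii)) hi; rewrite E eqxx.
- by have := Hp ii' (j' + f (- ii')) hi'; rewrite -E eqxx.
- done.
Qed.

Definition supp_le (f : int -> 'Z_3) (N : nat) := forall i : int, (N < `|i|)%N -> f i = 0.

Lemma Rho_hom f g k l N1 N2 : (0 < r)%N -> (3 * r <= m)%N ->
  supp_le f N1 -> supp_le g N2 -> (N1 + N2 + `|k| <= Mw)%N ->
  forall p, Rho (fun i => f i + g (i - k)) (k + l) p = Rho g l (Rho f k p).
Proof.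
move=> r0 r3 sf sg hM p.
case: (blkP r m0 p) => [ii j hi Ep|Hp].
- rewrite -Ep !Rho_pt // sh_pt /Rho.
  case: blkP => [ii3 j3 hi3 E3|H3].
  + have h1 : `|ii + k| <= (2*Mw)%:Z by clear -hi hM; lia.
    have h2 : `|ii3| <= (2*Mw)%:Z by clear -hi3; lia.
    rewrite sh_pt in E3; have [E1 E2] := pt_inj r0 r3 h2 h1 E3.
    subst ii3 j3; rewrite sh_pt; congr pt; first by rewrite addrA.
    by rewrite addrA opprD.
  + have hout : (Mw < absz (ii + k)%R)%N.
      case: (leqP (absz (ii + k)%R) Mw) => // h.
      have h' : `|ii + k| <= Mw%:Z by clear -h; lia.
      by have := H3 (ii + k) (j + f (- ii)) h'; rewrite sh_pt eqxx.
    rewrite (sg (- ii - k)); last by clear -hout hM; lia.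
    by rewrite addr0 !sh_pt addrA.
- have -> : Rho f k p = sh p k.
    by rewrite /Rho; case: blkP Hp => // ii j hi E /(_ ii j hi); rewrite E eqxx.
  have -> : Rho (fun i => f i + g (i - k)) (k + l) p = sh p (k + l).
    by rewrite /Rho; case: blkP Hp => // ii j hi E /(_ ii j hi); rewrite E eqxx.
  rewrite /Rho; case: blkP => [ii3 j3 hi3 E3|H3]; last by rewrite sh_sh.
  have Ep : p = pt (ii3 - k) j3.
    by rewrite -{1}(sh0 p) -(subrr k) -sh_sh -E3 sh_pt.
  have hout : (Mw < absz (ii3 - k)%R)%N.
    case: (leqP (absz (ii3 - k)%R) Mw) => // h.
    have h' : `|ii3 - k| <= Mw%:Z by clear -h; lia.
    by have := Hp (ii3 - k) j3 h'; rewrite -Ep eqxx.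
  rewrite (sg (- ii3)); last by clear -hout hM; lia.
  by rewrite addr0 E3 sh_sh.
Qed.

End Rho.

Lemma odd_permX (T : finType) (s : {perm T}) n : odd_perm (s ^+ n) = odd n && odd_perm s.
Proof.
elim: n => [|n IH]; first by rewrite expg0 odd_perm1.
by rewrite expgS odd_permM IH /=; case: (odd n); case: (odd_perm s).
Qed.

Lemma iter_ordS m (p : 'I_m) k : (iter k (@ordS m) p : nat) = ((p + k) %% m)%N.
Proof.
have m0 : (0 < m)%N by case: p => /= i; case: m => //.
elim: k => [|k IH] /=; first by rewrite addn0 modn_small.
by rewrite /= IH -[(((p + k) %% m).+1)%N]addn1 modnDml addn1 addnS.
Qed.

Lemma gen_sub (d : nat -> nat) (S0 : Pt d -> Prop) : is_subgroup (gen S0).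
Proof.
split.
- by move=> H [h1 _ _] _.
- by move=> x y gx gy H hH hS; case: (hH) => _ hM _; apply: hM; [apply: gx|apply: gy].
- by move=> x gx H hH hS; case: (hH) => _ _ hI; apply: hI; apply: gx.
Qed.

Lemma gen_incl (d : nat -> nat) (S0 : Pt d -> Prop) y : S0 y -> gen S0 y.
Proof. by move=> Sy H _ hS; apply: hS. Qed.

Lemma gen_min (d : nat -> nat) (S0 H : Pt d -> Prop) :
  is_subgroup H -> (forall y, S0 y -> H y) -> forall x, gen S0 x -> H x.
Proof. by move=> hH hS x gx; apply: gx. Qed.

Lemma Pt_ext (d : nat -> nat) (x y : Pt d) : (forall n, x n = y n) -> x = y.
Proof. move=> H; exact: functional_extensionality_dep H. Qed.

Lemma Wt_ext (w w' : Wt) : (forall i, w.1 i = w'.1 i) -> w.2 = w'.2 -> w = w'.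
Proof.
case: w => f k; case: w' => g l /= H ->; congr pair.
exact: functional_extensionality H.
Qed.

Definition Winv (w : Wt) : Wt := (fun i => - w.1 (i + w.2), - w.2).

Lemma in_W_mul w w' : in_W w -> in_W w' -> in_W (Wmul w w').
Proof.
case: w => f k; case: w' => g l [N1 /= s1] [N2 /= s2].
exists (N1 + N2 + `|k|)%N => i hi /=.
rewrite s1 ?s2 ?addr0 //; lia.
Qed.

Lemma in_W_inv w : in_W w -> in_W (Winv w).
Proof.
case: w => f k [N /= s]; exists (N + `|k|)%N => i hi /=.
by rewrite s ?oppr0 //; lia.
Qed.

Lemma Wmul_inv w : Wmul w (Winv w) = W1.
Proof. by apply: Wt_ext => [i|] /=; rewrite ?subrK subrr. Qed.

Lemma in_W1 : in_W W1.
Proof. by exists 0%N. Qed.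

Definition Wgen (w : Wt) := forall S : Wt -> Prop,
  S Wa -> S (Winv Wa) -> S Wb0 -> S W1 -> (forall x y, S x -> S y -> S (Wmul x y)) -> S w.

Lemma Wgen_all w : in_W w -> Wgen w.
Proof.
case: w => f k [N /= s]; move=> S Sa Sai Sb S1 SM.
have Sk : forall k : int, S (fun _ => 0, k).
  have Sp : forall n : nat, S (fun _ => 0, n%:Z) /\ S (fun _ => 0, - n%:Z).
    elim=> [|n [IH1 IH2]]; first by rewrite oppr0; split; exact: S1.
    split.
    + have -> : ((fun _ => 0 : 'Z_3), n.+1%:Z) = Wmul (fun _ => 0, n%:Z) Wa.
        by apply: Wt_ext => [i|] /=; rewrite ?addr0 // -addn1 PoszD.
      exact: SM.
    + have -> : ((fun _ => 0 : 'Z_3), - n.+1%:Z) = Wmul (fun _ => 0, - n%:Z) (Winv Wa).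
        by apply: Wt_ext => [i|] /=; rewrite ?oppr0 ?addr0 // -addn1 PoszD opprD.
      exact: SM.
  by case=> n; [case: (Sp n)| case: (Sp n.+1) => _; rewrite NegzE].
have Sd : forall (a : int) (c : 'Z_3), S (fun i => if i == a then c else 0, 0).
  move=> a c.
  have S1d : S (fun i => if i == a then 1 else 0, 0).
    have -> : ((fun i => if i == a then 1 else 0 : 'Z_3), 0) =
      Wmul (Wmul (fun _ => 0, a) Wb0) (fun _ => 0, - a).
      apply: Wt_ext => [i|] /=; last by rewrite addr0 subrr.
      by rewrite add0r addr0 subr_eq0.
    by apply: (SM); [apply: (SM); [exact: Sk|exact: Sb]|exact: Sk].
  case: c => [[|[|[|c]]] hc] //.
  - have -> : ((fun i => if i == a then Ordinal hc else 0 : 'Z_3), 0) = W1.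
      by apply: Wt_ext => [i|] //=; case: (i == a); apply: val_inj.
    exact: S1.
  - have -> : ((fun i => if i == a then Ordinal hc else 0 : 'Z_3), 0) =
             ((fun i => if i == a then 1 else 0 : 'Z_3), 0) :> Wt.
      by apply: Wt_ext => [i|] //=; case: (i == a); apply: val_inj.
    exact: S1d.
  - have -> : ((fun i => if i == a then Ordinal hc else 0 : 'Z_3), 0) =
       Wmul (fun i => if i == a then 1 else 0, 0) (fun i => if i == a then 1 else 0, 0) :> Wt.
      by apply: Wt_ext => [i|] //=; rewrite subr0 ?addr0 //; case: (i == a); apply: val_inj.
    by apply: (SM).
have SL : forall (L : seq int) (g : int -> 'Z_3), (forall i, i \notin L -> g i = 0) -> S (g, 0).
  elim=> [|a L IH] g hg.
    have -> : (g, 0) = W1 by apply: Wt_ext => [i|] //=; apply: hg.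
    exact: S1.
  have -> : (g, 0) = Wmul (fun i => if i == a then 0 else g i, 0)
                          (fun i => if i == a then g a else 0, 0).
    apply: Wt_ext => [i|] /=; last by rewrite addr0.
    by rewrite subr0; case: eqP => [->|]; rewrite ?add0r ?addr0.
  apply: (SM) => //; apply: IH => i hi; case: eqP => // /eqP ne.
  by apply: hg; rewrite in_cons negb_or ne.
have -> : (f, k) = Wmul (f, 0) (fun _ => 0, k).
  by apply: Wt_ext => [i|] /=; rewrite ?add0r ?addr0 ?subr0.
apply: (SM) => //.
apply: (SL [seq (i%:Z - N%:Z) | i <- iota 0 (2 * N).+1]) => i hi.
apply: s; case: leqP => // hiN.
case/negP: hi; apply/mapP; exists (absz (i + N%:Z)%R); last by lia.
by rewrite mem_iota; lia.
Qed.
Lemma mod_mul_inj (D R t t' : nat) : prime D -> (0 < R < D)%N -> (t < D)%N -> (t' < D)%N ->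
  ((t * R) %% D = (t' * R) %% D)%N -> t = t'.
Proof.
move=> pd /andP [hr hrd] ht ht' E.
wlog le : t t' ht ht' E / (t <= t')%N.
  move=> W; case: (leqP t t') => h; first exact: W.
  by symmetry; apply: W => //; apply: ltnW.
have hle : (t * R <= t' * R)%N by apply: leq_mul.
have h1 : (D %| (t' - t) * R)%N.
  rewrite mulnBl -eqn_mod_dvd //.
  by apply/eqP.
move: h1; rewrite Euclid_dvdM // => /orP [] h.
- case: (posnP (t' - t)) => h0; first by lia.
  by have := dvdn_leq h0 h; lia.
- by have := dvdn_leq hr h; lia.
Qed.


Lemma cyc_eval (T : finType) (a b c p : T) : a != b -> a != c -> b != c ->
  (tperm a b * tperm a c)%g p = if p == a then b else if p == b then c else if p == c then a else p.
Proof.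
move=> ab ac bc; rewrite permM.
case: (p =P a) => [->|pa]; first by rewrite tpermL tpermD // eq_sym.
case: (p =P b) => [->|pb]; first by rewrite tpermR tpermL.
case: (p =P c) => [->|pc]; first by rewrite (tpermD ac bc) tpermR.
rewrite !tpermD //.
all: rewrite eq_sym; apply/eqP => E; by [apply: pa | apply: pb | apply: pc].
Qed.


Section C3.
Variable X : finType.
Local Open Scope group_scope.

Definition c3 (a b c : X) : {perm X} := tperm a b * tperm a c.

Definition dist3 (a b c : X) := [&& a != b, a != c & b != c].
Ltac d3 := rewrite /dist3; apply/and3P; split; first [done | by rewrite eq_sym].


Lemma c3E a b c p : dist3 a b c ->
  c3 a b c p = if p == a then b else if p == b then c else if p == c then a else p.
Proof. by case/and3P => ab ac bc; apply: cyc_eval. Qed.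

Lemma c3J a b c g : c3 a b c ^ g = c3 (g a) (g b) (g c).
Proof. by rewrite /c3 conjMg !tpermJ. Qed.

Lemma dist3_rot a b c : dist3 a b c -> dist3 b c a.
Proof. by case/and3P => ab ac bc; rewrite /dist3 bc eq_sym ab eq_sym ac. Qed.

Lemma dist3_swap a b c : dist3 a b c -> dist3 a c b.
Proof. by case/and3P => ab ac bc; rewrite /dist3 ab ac eq_sym bc. Qed.

Lemma c3_rot a b c : dist3 a b c -> c3 a b c = c3 b c a.
Proof.
move=> D; have D' := dist3_rot D.
apply/permP => p; rewrite !c3E //.
case/and3P: D => ab ac bc.
do ![case: eqP => // ?; subst]; by move: ab ac bc; rewrite ?eqxx.
Qed.

Lemma c3_sq a b c : dist3 a b c -> c3 a c b = c3 a b c * c3 a b c.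
Proof.
move=> D; have D' := dist3_swap D.
apply/permP => p; rewrite permM !c3E //.
case/and3P: D => ab ac bc.
have ba : b != a by rewrite eq_sym.
have ca : c != a by rewrite eq_sym.
have cb : c != b by rewrite eq_sym.
case: (p =P a) => [E|/eqP pa]; first by subst p; do 3!rewrite ?eqxx ?(negbTE ab) ?(negbTE ac) ?(negbTE bc) ?(negbTE ba) ?(negbTE ca) ?(negbTE cb).
case: (p =P b) => [E|/eqP pb]; first by subst p; do 3!rewrite ?eqxx ?(negbTE ab) ?(negbTE ac) ?(negbTE bc) ?(negbTE ba) ?(negbTE ca) ?(negbTE cb).
case: (p =P c) => [E|/eqP pc]; first by subst p; do 3!rewrite ?eqxx ?(negbTE ab) ?(negbTE ac) ?(negbTE bc) ?(negbTE ba) ?(negbTE ca) ?(negbTE cb).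
by rewrite (negbTE pa) (negbTE pb) (negbTE pc).
Qed.

Lemma c3_Alt a b c : dist3 a b c -> c3 a b c \in 'Alt_X.
Proof.
by case/and3P => ab ac bc; rewrite Alt_even /c3 odd_permM !odd_tperm ab ac.
Qed.

Lemma c3_1 a b c : dist3 a b c -> c3 a b c a = b.
Proof. by move=> D; rewrite c3E // eqxx. Qed.

Lemma c3_2 a b c : dist3 a b c -> c3 a b c b = c.
Proof. by move=> D; case/and3P: (D) => ab _ _; rewrite c3E // eq_sym (negbTE ab) eqxx. Qed.

Lemma c3_3 a b c : dist3 a b c -> c3 a b c c = a.
Proof.
by move=> D; case/and3P: (D) => ab ac bc; rewrite c3E // eq_sym (negbTE ac) eq_sym (negbTE bc) eqxx.
Qed.

Lemma c3_fix a b c p : dist3 a b c -> p != a -> p != b -> p != c -> c3 a b c p = p.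
Proof. by move=> D pa pb pc; rewrite c3E // (negbTE pa) (negbTE pb) (negbTE pc). Qed.

Lemma all3 (T : {group {perm X}}) x y : x != y ->
  (forall z, z != x -> z != y -> c3 x y z \in T) ->
  forall a b c, dist3 a b c -> c3 a b c \in T.
Proof.
move=> xy Hz.
have Hy : forall b c, dist3 y b c -> b != x -> c != x -> c3 y b c \in T.
  move=> b c D bx cx; case/and3P: (D) => yb yc bc.
  have Db : dist3 x y b by d3.
  have -> : c3 y b c = c3 x y c ^ c3 x y b.
    rewrite c3J c3_1 // c3_2 // c3_fix //; by rewrite eq_sym.
  by apply: groupJ; apply: Hz; rewrite // eq_sym.
have Hx : forall b c, dist3 x b c -> b != y -> c != y -> c3 x b c \in T.
  move=> b c D hby cy; case/and3P: (D) => xb xc bc.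
  have Dc : dist3 x y c by d3.
  have -> : c3 x b c = c3 y c b ^ c3 x y c.
    rewrite c3J c3_2 // c3_3 // c3_fix //; last by rewrite eq_sym.
    rewrite (c3_rot (a:=c)) //; d3.
  apply: groupJ; last by apply: Hz; rewrite // eq_sym.
  apply: Hy; first d3; by rewrite eq_sym.
have HX : forall b c, dist3 x b c -> c3 x b c \in T.
  move=> b c D; case/and3P: (D) => xb xc bc.
  case: (b =P y) => [E|/eqP hby]; first by subst b; apply: Hz; rewrite // eq_sym.
  case: (c =P y) => [E|/eqP cy]; last exact: Hx.
  subst c; have D' : dist3 x y b by rewrite /dist3 xy xb eq_sym.
  by rewrite c3_sq // groupM //; apply: Hz; rewrite // eq_sym.
have HY : forall b c, dist3 y b c -> c3 y b c \in T.
  move=> b c D; case/and3P: (D) => yb yc bc.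
  case: (b =P x) => [E|/eqP bx].
    subst b; rewrite c3_rot //; apply: HX; exact: dist3_rot.
  case: (c =P x) => [E|/eqP cx]; last exact: Hy.
  subst c; rewrite c3_rot // c3_rot; last exact: dist3_rot.
  by apply: HX; do 2!apply: dist3_rot.
move=> a b c D.
case: (a =P x) => [E|/eqP ax]; first by subst a; apply: HX.
case: (b =P x) => [E|/eqP bx].
  by subst b; rewrite c3_rot //; apply: HX; exact: dist3_rot.
case: (c =P x) => [E|/eqP cx].
  subst c; rewrite c3_rot // c3_rot; last exact: dist3_rot.
  by apply: HX; do 2!apply: dist3_rot.
case: (a =P y) => [E|/eqP ay]; first by subst a; apply: HY.
case: (b =P y) => [E|/eqP hby].
  by subst b; rewrite c3_rot //; apply: HY; exact: dist3_rot.
case: (c =P y) => [E|/eqP cy].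
  subst c; rewrite c3_rot // c3_rot; last exact: dist3_rot.
  by apply: HY; do 2!apply: dist3_rot.
case/and3P: (D) => ab ac bc.
have Da : dist3 x y a by d3.
have -> : c3 a b c = c3 y b c ^ c3 x y a.
  by rewrite c3J c3_2 // !c3_fix // eq_sym.
apply: groupJ; first by apply: HY; d3.
exact: Hz.
Qed.

Lemma c3_ne1 a b c : dist3 a b c -> c3 a b c != 1.
Proof.
move=> D; apply/eqP => E; have := c3_1 D; rewrite E perm1 => ab.
by case/and3P: D; rewrite ab eqxx.
Qed.

Lemma Alt_sub3 (T : {group {perm X}}) : (4 < #|X|)%N ->
  (forall a b c, dist3 a b c -> c3 a b c \in T) -> 'Alt_X \subset T.
Proof.
move=> hX H3.
pose A := [set s : {perm X} | [exists a, [exists b, [exists c, dist3 a b c && (s == c3 a b c)]]]].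
have memA : forall s, reflect (exists a b c, dist3 a b c /\ s = c3 a b c) (s \in A).
  move=> s; rewrite inE; apply: (iffP existsP).
    by case=> a /existsP [b /existsP [c /andP [D /eqP E]]]; exists a, b, c.
  by case=> a [b [c [D E]]]; exists a; apply/existsP; exists b; apply/existsP; exists c; rewrite D E eqxx.
have AT : A \subset T.
  by apply/subsetP => s /memA [a [b [c [D ->]]]]; apply: H3.
have AAlt : A \subset 'Alt_X.
  by apply/subsetP => s /memA [a [b [c [D ->]]]]; apply: c3_Alt.
have nA : 'Alt_X \subset 'N(A).
  apply/subsetP => g _; rewrite inE; apply/subsetP => y /imsetP [z /memA [a [b [c [D ->]]]] ->].
  apply/memA; exists (g a), (g b), (g c); split; last exact: c3J.
  by case/and3P: D => ab ac bc; rewrite /dist3 !(inj_eq perm_inj) ab ac bc.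
have nH : <<A>> <| 'Alt_X.
  apply/andP; split; first by rewrite gen_subG.
  exact: subset_trans nA (norm_gen A).
have := simple_Alt5 hX; case/simpleP => _ sim.
case: (sim _ nH) => [H1|HAlt]; last by rewrite -HAlt gen_subG.
have : (2 < #|X|)%N by apply: leq_trans hX.
case/card_gt2P => a [b [c [_ [ab bc ca]]]].
have D : dist3 a b c by rewrite /dist3 ab bc eq_sym ca.
have : c3 a b c \in <<A>> by apply: mem_gen; apply/memA; exists a, b, c.
by rewrite H1 => /set1gP E; have := c3_ne1 D; rewrite E eqxx.
Qed.

End C3.

Definition pb (P : Prop) : bool := if excluded_middle_informative P then true else false.

Lemma pbP P : reflect P (pb P).
Proof. by rewrite /pb; case: excluded_middle_informative => h; constructor. Qed.

Lemma disjoint_commute (T : finType) (s t : {perm T}) :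
  (forall p, s p = p \/ t p = p) -> commute s t.
Proof.
move=> H; apply/permP => p; rewrite !permM.
case: (H p) => [sp|tp].
- rewrite sp; case: (H (t p)) => [->|ttp] //.
  by have := perm_inj ttp => ->; rewrite sp.
- rewrite tp; case: (H (s p)) => [ssp|->] //.
  by have := perm_inj ssp => ->; rewrite tp.
Qed.

Section Main.
Variables d r : nat -> nat.
Hypothesis d_mono : forall m n, (m <= n)%N -> (d m <= d n)%N.
Hypothesis d_prime : forall n, prime (d n) /\ (5 <= d n)%N.
Hypothesis r_pos : forall n, (0 < r n)%N.
Hypothesis r_incr : forall m n, (m < n)%N -> (r m < r n)%N.
Hypothesis dr : forall n, (3 * r n <= d n)%N.

Lemma dpos n : (0 < d n)%N.
Proof. by case: (d_prime n) => _ h; apply: leq_trans h. Qed.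

Lemma r_ge n : (n < r n)%N.
Proof.
elim: n => [|n IH]; first exact: r_pos.
by apply: leq_ltn_trans IH (r_incr (ltnSn n)).
Qed.

Lemma Mw_large K n : (4 * K <= n)%N -> (K <= Mw (r n))%N.
Proof. move=> h; have := r_ge n; rewrite /Mw; lia. Qed.

Lemma Mw_le n : (4 * Mw (r n) < r n)%N.
Proof. have := r_pos n; rewrite /Mw; lia. Qed.

Definition Phi (w : Wt) : Pt d := fun n => mkperm (Rho (r n) (dpos n) w.1 w.2).

Lemma PhiE w n p : Phi w n p = Rho (r n) (dpos n) w.1 w.2 p.
Proof. by rewrite /Phi mkpermE //; apply: Rho_inj. Qed.

Definition ev (x y : Pt d) := exists N, forall n, (N <= n)%N -> x n = y n.

Lemma ev_refl x : ev x x.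
Proof. by exists 0%N. Qed.

Lemma ev_sym x y : ev x y -> ev y x.
Proof. by case=> N H; exists N => n hn; rewrite H. Qed.

Lemma ev_trans x y z : ev x y -> ev y z -> ev x z.
Proof.
case=> N1 H1 [N2 H2]; exists (N1 + N2)%N => n hn.
by rewrite H1 ?H2 //; lia.
Qed.

Lemma ev_mul x x' y y' : ev x x' -> ev y y' -> ev (Pmul x y) (Pmul x' y').
Proof.
case=> N1 H1 [N2 H2]; exists (N1 + N2)%N => n hn.
by rewrite /Pmul H1 ?H2 //; lia.
Qed.

Lemma ev_inv x x' : ev x x' -> ev (Pinv x) (Pinv x').
Proof. by case=> N H; exists N => n hn; rewrite /Pinv H. Qed.

Lemma Phi_hom w w' : in_W w -> in_W w' -> ev (Phi (Wmul w w')) (Pmul (Phi w) (Phi w')).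
Proof.
case: w => f k; case: w' => g l [N1 /= s1] [N2 /= s2].
exists (4 * (N1 + N2 + `|k|))%N => n hn.
apply/permP => p; rewrite /Pmul permM !PhiE /=.
by apply: (@Rho_hom _ (r n) (dpos n) f g k l N1 N2); [apply: r_pos|apply: dr|exact: s1|exact: s2|apply: Mw_large].
Qed.

Lemma Phi_inj w w' : in_W w -> in_W w' -> ev (Phi w) (Phi w') -> w = w'.
Proof.
case: w => f k; case: w' => g l [N1 /= s1] [N2 /= s2] [N E].
pose K := (N1 + N2 + `|k| + `|l| + 1)%N.
pose n := (N + 4 * K)%N.
have hM : (K <= Mw (r n))%N by apply: Mw_large; rewrite /n; lia.
have hMr := Mw_le n.
have hrd := dr n.
have ev_p : forall p, Rho (r n) (dpos n) f k p = Rho (r n) (dpos n) g l p.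
  move=> p; have := PhiE (f, k) p; have := PhiE (g, l) p; rewrite /= => <- <-.
  by rewrite E // /n leq_addr.
have hkl : k = l.
  have := ev_p (pt (r n) (dpos n) (Mw (r n))%:Z 0).
  rewrite !Rho_pt //; try (by apply: r_pos); try (by lia).
  rewrite (s1 (- (Mw (r n))%:Z)); last by rewrite /K in hM; lia.
  rewrite (s2 (- (Mw (r n))%:Z)); last by rewrite /K in hM; lia.
  rewrite !sh_pt /pt => /pz_small H.
  have := H ltac:(rewrite /K in hM; lia).
  lia.
subst l; apply: Wt_ext => //= i.
case: (leqP (absz i) (Mw (r n))) => hi.
- have := ev_p (pt (r n) (dpos n) (- i) 0).
  rewrite !Rho_pt //; try (by apply: r_pos); try (by lia).
  rewrite opprK => /sh_inj /pt_inj [] //; try (by apply: r_pos); try (by lia).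
  by move=> _ /addrI.
- by rewrite s1 ?s2 //; rewrite /K in hM; lia.
Qed.

Lemma Phi_W1 : Phi W1 = P1 d.
Proof.
apply: Pt_ext => n; apply/permP => p.
by rewrite PhiE perm1 /= Rho_id.
Qed.

Lemma Phi_Wa : Phi Wa = alpha d.
Proof.
apply: Pt_ext => n; apply/permP => p.
rewrite PhiE /= Rho_shift /alpha /cycle_perm permE.
apply: val_inj => /=; apply/eqP; rewrite -eqz_nat.
have -> : (p : int) + 1 = (p.+1 : nat) by rewrite -addn1 PoszD.
rewrite pzE; [apply/eqP; exact: modz_nat|exact: dpos].
Qed.


Definition pt0 n (j : 'Z_3) : 'I_(d n) := pt (r n) (dpos n) 0 j.

Lemma pt0_val n (j : 'Z_3) : (pt0 n j : nat) = ((j : nat) * r n)%N.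
Proof.
have hj := Z3_lt j; have hd := dr n; have hr := r_pos n.
have h1 : ((j:nat) * r n < d n)%N.
  by case: j hj => [[|[|[|]]] ?] //= _; lia.
apply/eqP; rewrite -eqz_nat /pt0 /pt (pzE (dpos n)) add0r modz_small //; lia.
Qed.

Lemma pt0_eq n x y : (pt0 n x == pt0 n y) = (x == y).
Proof.
apply/eqP/eqP => [E|->] //.
have [||_ ->] := pt_inj (r_pos n) (dr n) _ _ E => //; lia.
Qed.

Lemma beta_E n : beta d r n = (tperm (pt0 n 0%R) (pt0 n 1%R) * tperm (pt0 n 0%R) (pt0 n 2%R))%g.
Proof.
have hd := dr n; have hr := r_pos n; have h0 := dpos n.
rewrite /beta /cyc3.
case: insubP => [a _ Ea|/negP []]; last by [].
case: insubP => [b _ Eb|/negP []]; last by lia.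
case: insubP => [c _ Ec|/negP []]; last by lia.
congr (tperm _ _ * tperm _ _)%g; apply: ord_inj; rewrite pt0_val.
- by rewrite -[nat_of_ord a]/(val a) Ea.
- by rewrite -[nat_of_ord b]/(val b) Eb /= mul1n.
- by rewrite -[nat_of_ord a]/(val a) Ea.
- by rewrite -[nat_of_ord c]/(val c) Ec.
Qed.

Lemma Phi_Wb0 : Phi Wb0 = beta d r.
Proof.
apply: Pt_ext => n; apply/permP => p.
rewrite PhiE beta_E cyc_eval ?pt0_eq //.
rewrite /Rho; case: (blkP (r n) (dpos n) p) => [ii j hi Ep|Hp] /=.
- rewrite -Ep sh0.
  case: (ii =P 0) => [->|ne].
  + rewrite oppr0 eqxx -/(pt0 n _) -/(pt0 n _) !pt0_eq.
    by case: j {Ep} => [[|[|[|j]]] hj] //=; congr pt0; apply: val_inj.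
  + have -> : (- ii == 0) = false by apply/eqP => E; apply: ne; rewrite -oppr0 -E opprK.
    rewrite addr0.
    have nz : forall x, (pt (r n) (dpos n) ii j == pt0 n x) = false.
      move=> x; apply/eqP => E; have [||] := pt_inj (r_pos n) (dr n) _ _ E => //; lia.
    by rewrite !nz.
- rewrite sh0.
  have nz : forall x, (p == pt0 n x) = false.
    by move=> x; apply/negbTE; rewrite eq_sym; apply: Hp.
  by rewrite !nz.
Qed.

Lemma odd_d n : odd (d n).
Proof.
case: (d_prime n) => pd h; case: (even_prime pd) => // E; by rewrite E in h.
Qed.

Lemma alpha_Alt n : alpha d n \in ('Alt_('I_(d n)))%g.
Proof.
rewrite Alt_even.
have h : (alpha d n ^+ d n)%g = 1%g.
  apply/permP => p; rewrite permX perm1.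
  have E : iter (d n) (alpha d n) p = iter (d n) (@ordS (d n)) p.
    by apply: eq_iter => q; rewrite /alpha /cycle_perm permE.
  rewrite E; apply: ord_inj; rewrite iter_ordS modnDr modn_small //.
apply/negP => oa; have := congr1 (@odd_perm _) h.
by rewrite odd_permX odd_d oa odd_perm1.
Qed.

Lemma beta_Alt n : beta d r n \in ('Alt_('I_(d n)))%g.
Proof. by rewrite Alt_even beta_E odd_permM !odd_tperm !pt0_eq. Qed.

Lemma alpha_pow n (k : nat) p : (alpha d n ^+ k)%g p = sh (dpos n) p k%:Z.
Proof.
rewrite permX.
have -> : iter k (alpha d n) p = iter k (@ordS (d n)) p.
  by apply: eq_iter => q; rewrite /alpha /cycle_perm permE.
apply: ord_inj; rewrite iter_ordS; apply/eqP; rewrite -eqz_nat /sh (pzE (dpos n)).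
by apply/eqP; rewrite -modz_nat PoszD.
Qed.

Lemma alpha_powV n (k : nat) p : ((alpha d n ^+ k)^-1)%g p = sh (dpos n) p (- k%:Z).
Proof.
apply: (@perm_inj _ (alpha d n ^+ k)%g).
by rewrite -permM mulVg perm1 alpha_pow sh_sh addNr sh0.
Qed.

Definition Q n (t : nat) : 'I_(d n) := pz (dpos n) (t * r n)%N%:Z.

Lemma Q_inj n t t' : (t < d n)%N -> (t' < d n)%N -> Q n t = Q n t' -> t = t'.
Proof.
move=> ht ht' /pz_eq; rewrite !modz_nat => /eqP; rewrite eqz_nat => /eqP E.
have [pd _] := d_prime n; have hr := r_pos n; have hd := dr n.
apply: (mod_mul_inj pd _ ht ht' E); apply/andP; split => //; lia.
Qed.

Lemma Q_onto n (p : 'I_(d n)) : exists2 t, (t < d n)%N & Q n t = p.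
Proof.
pose f (t : 'I_(d n)) := Q n t.
have fi : injective f by move=> t t' /Q_inj E; apply: ord_inj; apply: E.
have : p \in codom f by apply: inj_card_onto.
by case/codomP => t ->; exists t.
Qed.

Lemma Q_neq n t t' : (t < d n)%N -> (t' < d n)%N -> t != t' -> Q n t != Q n t'.
Proof. by move=> ht ht' ne; apply/eqP => /Q_inj E; rewrite E ?eqxx in ne. Qed.

Lemma beta_c3 n : beta d r n = c3 (pt0 n 0) (pt0 n 1) (pt0 n 2).
Proof. by rewrite beta_E. Qed.

Lemma c3_Q n t : (c3 (Q n t) (Q n t.+1) (Q n t.+2)) = ((beta d r n) ^ (alpha d n ^+ (t * r n)))%g.
Proof.
rewrite beta_c3 c3J !alpha_pow.
congr c3; rewrite /pt0 sh_pt /pt /Q; congr pz; rewrite /= /Zp_trunc /= ?modn_small //; nia.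
Qed.

Definition Tn n : {group {perm 'I_(d n)}} := <<[set alpha d n; beta d r n]>>%G.

Lemma Alt_Tn n : ('Alt_('I_(d n)) \subset Tn n)%g.
Proof.
have hd5 : (4 < #|'I_(d n)|)%N by rewrite card_ord; case: (d_prime n).
apply: Alt_sub3 => //.
have cT : forall t, c3 (Q n t) (Q n t.+1) (Q n t.+2) \in Tn n.
  move=> t; rewrite c3_Q; apply: groupJ.
  - by apply: mem_gen; rewrite !inE eqxx orbT.
  - by apply: groupX; apply: mem_gen; rewrite !inE eqxx.
have d5 : (4 < d n)%N by case: (d_prime n).
have chain : forall i, (2 <= i < d n)%N -> c3 (Q n 0) (Q n 1) (Q n i) \in Tn n.
  elim=> [|i IH] // /andP [hi hid].
  case: (ltngtP i 2) => hi2.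
  - have -> : i = 1%N by lia.
    exact: cT 0%N.
  - have Hi : c3 (Q n 0) (Q n 1) (Q n i) \in Tn n by apply: IH; lia.
    have -> : c3 (Q n 0) (Q n 1) (Q n i.+1) =
      (c3 (Q n 0) (Q n 1) (Q n i) ^ c3 (Q n i.-1) (Q n i) (Q n i.+1))%g.
      have Di : dist3 (Q n i.-1) (Q n i) (Q n i.+1).
        by rewrite /dist3 !Q_neq //; lia.
      rewrite c3J c3_2 // !c3_fix //; apply: Q_neq; lia.
    apply: groupJ => //; have e : i.-1.+1 = i by lia.
    by have := cT i.-1; rewrite e.
  - subst i.
    have -> : c3 (Q n 0) (Q n 1) (Q n 3) = (c3 (Q n 0) (Q n 1) (Q n 2) ^ c3 (Q n 2) (Q n 3) (Q n 4))%g.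
      have D2 : dist3 (Q n 2) (Q n 3) (Q n 4) by rewrite /dist3 !Q_neq //; lia.
      rewrite c3J c3_1 // !c3_fix //; apply: Q_neq; lia.
    by apply: groupJ; apply: cT.
apply: (@all3 _ _ (Q n 0) (Q n 1)); first by rewrite Q_neq //; lia.
move=> z z0 z1; have [i hi Ei] := Q_onto z; subst z.
apply: chain; apply/andP; split => //.
case: i z0 z1 hi => [|[|i]] //; by rewrite eqxx.
Qed.

Definition conjP (g x : Pt d) : Pt d := Pmul (Pmul g x) (Pinv g).

Lemma G_sub : is_subgroup (Ggen d r).
Proof. exact: gen_sub. Qed.

Lemma G_alpha : Ggen d r (alpha d).
Proof. by apply: gen_incl; left. Qed.

Lemma G_beta : Ggen d r (beta d r).
Proof. by apply: gen_incl; right. Qed.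

Lemma G_1 : Ggen d r (P1 d).
Proof. by case: G_sub. Qed.

Lemma G_mul x y : Ggen d r x -> Ggen d r y -> Ggen d r (Pmul x y).
Proof. by case: G_sub => _ h _; apply: h. Qed.

Lemma G_inv x : Ggen d r x -> Ggen d r (Pinv x).
Proof. by case: G_sub => _ _ h; apply: h. Qed.

Lemma L_sub : is_subgroup (Linf d r).
Proof. exact: gen_sub. Qed.

Lemma L_1 : Linf d r (P1 d).
Proof. by case: L_sub. Qed.

Lemma L_mul x y : Linf d r x -> Linf d r y -> Linf d r (Pmul x y).
Proof. by case: L_sub => _ h _; apply: h. Qed.

Lemma L_inv x : Linf d r x -> Linf d r (Pinv x).
Proof. by case: L_sub => _ _ h; apply: h. Qed.

Lemma L_G x : Linf d r x -> Ggen d r x.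
Proof.
apply: gen_min; first exact: G_sub.
move=> y [g [Gg ->]]; apply: G_mul; [apply: G_mul => //; exact: G_beta | exact: G_inv].
Qed.

Lemma L_beta : Linf d r (beta d r).
Proof.
apply: gen_incl; exists (P1 d); split; first exact: G_1.
by apply: Pt_ext => n; rewrite /Pmul /Pinv /P1 mul1g invg1 mulg1.
Qed.

Lemma L_conj g x : Ggen d r g -> Linf d r x -> Linf d r (conjP g x).
Proof.
move=> Gg; move: x; apply: (gen_min (H := fun x => Linf d r (conjP g x))).
- split.
  + have -> : conjP g (P1 d) = P1 d.
      by apply: Pt_ext => n; rewrite /conjP /Pmul /Pinv /P1 mulg1 mulgV.
    exact: L_1.
  + move=> x y hx hy.
    have -> : conjP g (Pmul x y) = Pmul (conjP g x) (conjP g y).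
      by apply: Pt_ext => n; rewrite /conjP /Pmul /Pinv !mulgA mulgKV.
    exact: L_mul.
  + move=> x hx.
    have -> : conjP g (Pinv x) = Pinv (conjP g x).
      by apply: Pt_ext => n; rewrite /conjP /Pmul /Pinv !invMg invgK mulgA.
    exact: L_inv.
- move=> y [h [Gh ->]]; apply: gen_incl; exists (Pmul g h); split; first exact: G_mul.
  by apply: Pt_ext => n; rewrite /conjP /Pmul /Pinv invMg !mulgA.
Qed.

Definition LinfAt n (s : {perm 'I_(d n)}) :=
  exists x : Pt d, [/\ Linf d r x, x n = s & forall m, m != n -> x m = 1%g].

Lemma below k : (forall m, (m < k)%N -> forall s, s \in ('Alt_('I_(d m)))%g -> LinfAt s) ->
  forall y : Pt d, (forall m, y m \in ('Alt_('I_(d m)))%g) -> (forall m, (k <= m)%N -> y m = 1%g) ->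
  Linf d r y.
Proof.
elim: k => [|k IH] Hall y yA y1.
  have -> : y = P1 d by apply: Pt_ext => m; apply: y1.
  exact: L_1.
have [x [Lx xk x1]] := Hall k (ltnSn k) (y k) (yA k).
pose y' : Pt d := fun m => if (m < k)%N then y m else 1%g.
have -> : y = Pmul y' x.
  apply: Pt_ext => m; rewrite /Pmul /y'.
  case: (ltngtP m k) => h.
  - by rewrite x1 ?mulg1 // neq_ltn h.
  - by rewrite y1 // x1 ?mulg1 // neq_ltn h orbT.
  - by subst m; rewrite xk mul1g.
apply: L_mul => //; apply: IH.
- by move=> m hm; apply: Hall; apply: ltnW.
- by move=> m; rewrite /y'; case: ifP => _ //; apply: group1.
- by move=> m hm; rewrite /y' ltnNge hm.
Qed.

Definition Sn n : {set {perm 'I_(d n)}} := [set s | pb (LinfAt s)].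

Lemma SnP n (s : {perm 'I_(d n)}) : reflect (LinfAt s) (s \in Sn n).
Proof. by rewrite inE; apply: pbP. Qed.

Lemma Sn_group n : group_set (Sn n).
Proof.
apply/group_setP; split.
  by apply/SnP; exists (P1 d); split => //; exact: L_1.
move=> s t /SnP [x [Lx xn x1]] /SnP [y [Ly yn y1]].
apply/SnP; exists (Pmul x y); split; first exact: L_mul.
  by rewrite /Pmul xn yn.
by move=> m hm; rewrite /Pmul x1 ?y1 ?mulg1.
Qed.

Definition SnG n : {group {perm 'I_(d n)}} := Group (Sn_group n).

Lemma Sn_norm n g : Ggen d r g -> g n \in ('N(Sn n))%g.
Proof.
move=> Gg; rewrite inE; apply/subsetP => y /imsetP [z /SnP [x [Lx xn x1]] ->].
apply/SnP; exists (conjP (Pinv g) x); split.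
- by apply: L_conj => //; apply: G_inv.
- by rewrite /conjP /Pmul /Pinv invgK xn conjgE mulgA.
- by move=> m hm; rewrite /conjP /Pmul /Pinv x1 // mulg1 invgK mulVg.
Qed.

Lemma Alt_norm_Sn n : ('Alt_('I_(d n)) \subset 'N(Sn n))%g.
Proof.
apply: subset_trans (Alt_Tn n) _; rewrite gen_subG; apply/subsetP => y.
by rewrite in_set2 => /orP [] /eqP ->; [exact: (Sn_norm n G_alpha) | exact: (Sn_norm n G_beta)].
Qed.

Definition Citer (s : nat) : Pt d := iter s (conjP (alpha d)) (beta d r).

Lemma L_Citer s : Linf d r (Citer s).
Proof.
elim: s => [|s IH] /=; first exact: L_beta.
by apply: L_conj => //; exact: G_alpha.
Qed.

Lemma Citer_E s m : Citer s m = (alpha d m ^+ s * beta d r m * (alpha d m ^+ s)^-1)%g.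
Proof.
elim: s => [|s IH]; first by rewrite /= expg0 mul1g invg1 mulg1.
rewrite /Citer iterS -/(Citer s) /conjP /Pmul /Pinv IH expgS invMg !mulgA //.
Qed.

Lemma Citer_eval s m p : Citer s m p = sh (dpos m) (beta d r m (sh (dpos m) p s%:Z)) (- s%:Z).
Proof. by rewrite Citer_E !permM alpha_pow alpha_powV. Qed.

Lemma Citer_Alt s m : Citer s m \in ('Alt_('I_(d m)))%g.
Proof.
by rewrite Citer_E !groupM ?groupV ?groupX ?alpha_Alt ?beta_Alt.
Qed.

Lemma dist3_pt0 m : dist3 (pt0 m 0) (pt0 m 1) (pt0 m 2).
Proof. by rewrite /dist3 !pt0_eq. Qed.

Lemma beta_fix m p : p != pt0 m 0 -> p != pt0 m 1 -> p != pt0 m 2 -> beta d r m p = p.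
Proof. by move=> h0 h1 h2; rewrite beta_c3 c3_fix // dist3_pt0. Qed.

Lemma beta0 m : beta d r m (pt0 m 0) = pt0 m 1.
Proof. by rewrite beta_c3 c3_1 // dist3_pt0. Qed.
Lemma beta1 m : beta d r m (pt0 m 1) = pt0 m 2.
Proof. by rewrite beta_c3 c3_2 // dist3_pt0. Qed.
Lemma beta2 m : beta d r m (pt0 m 2) = pt0 m 0.
Proof. by rewrite beta_c3 c3_3 // dist3_pt0. Qed.

Lemma pt0_pz m (j : 'Z_3) : pt0 m j = pz (dpos m) ((j : nat)%:Z * (r m)%:Z).
Proof. by rewrite /pt0 /pt add0r. Qed.

Lemma sh_pz m x k : sh (dpos m) (pz (dpos m) x) k = pz (dpos m) (x + k).
Proof. by rewrite /sh pz_pz. Qed.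

Lemma sh_pt0_val m (j : 'Z_3) (s : nat) : (s + (j : nat) * r m < d m)%N ->
  (sh (dpos m) (pt0 m j) s%:Z : nat) = (s + (j : nat) * r m)%N.
Proof.
move=> h; rewrite pt0_pz sh_pz; apply/eqP; rewrite -eqz_nat (pzE (dpos m)).
by rewrite modz_small; [apply/eqP; lia | lia].
Qed.

Lemma comm_large n m : (n < m)%N -> commute (beta d r m) (Citer (r n) m).
Proof.
move=> nm; apply: disjoint_commute => p.
have hs := r_incr nm; have hs0 := r_pos n; have hd := dr m.
have neq : forall j j' : 'Z_3, sh (dpos m) (pt0 m j) (r n)%:Z != pt0 m j'.
  move=> j j'; apply/eqP => /(congr1 (@nat_of_ord _)).
  have hj := Z3_lt j; have hj' := Z3_lt j'.
  rewrite pt0_val sh_pt0_val; last by case: (j : nat) hj => [|[|[|]]] //= _; lia.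
  by case: (j : nat) hj => [|[|[|]]] //= _; case: (j' : nat) hj' => [|[|[|]]] //= _; lia.
case: (boolP [|| p == pt0 m 0, p == pt0 m 1 | p == pt0 m 2]) => H.
- right; rewrite Citer_eval beta_fix; first by rewrite sh_sh addrN sh0.
  1-3: by case/or3P: H => /eqP ->; apply: neq.
- left; move: H; rewrite !negb_or => /and3P [h0 h1 h2]; exact: beta_fix.
Qed.

Lemma noncomm n : ~ commute (beta d r n) (Citer (r n) n).
Proof.
move=> E; have := congr1 (fun s : {perm _} => s (pt0 n 0)) E; rewrite /= !permM.
have hd := dr n; have hr := r_pos n.
have E1 : sh (dpos n) (pt0 n 1) (r n)%:Z = pt0 n 2.
  by rewrite !pt0_pz sh_pz; congr pz; rewrite /= /Zp_trunc /= ?modn_small //; nia.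
have E2 : sh (dpos n) (pt0 n 0) (r n)%:Z = pt0 n 1.
  by rewrite !pt0_pz sh_pz; congr pz; rewrite /= /Zp_trunc /= ?modn_small //; nia.
have E3 : sh (dpos n) (pt0 n 2) (- (r n)%:Z) = pt0 n 1.
  by rewrite !pt0_pz sh_pz; congr pz; rewrite /= /Zp_trunc /= ?modn_small //; nia.
rewrite !Citer_eval beta0 E1 beta2 E2 beta1 E3 beta1.
have v0 : nat_of_ord (0%R : 'Z_3) = 0%N by [].
have v2 : nat_of_ord (2%R : 'Z_3) = 2%N by [].
rewrite !pt0_pz sh_pz v0 v2 => /pz_small H.
have h3 : (3 * r n != d n)%N.
  apply/eqP => e; case: (d_prime n) => pd h5.
  case/primeP: pd => _ /(_ 3%N); rewrite -e dvdn_mulr // => /(_ isT) /orP [] /eqP; lia.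
have := H ltac:(lia).
lia.
Qed.

Lemma Hall n : forall s, s \in ('Alt_('I_(d n)))%g -> LinfAt s.
Proof.
elim/ltn_ind: n => n IH s sA.
pose C := Citer (r n).
pose c : Pt d := fun m => [~ beta d r m, C m]%g.
have Lc : Linf d r c.
  have -> : c = Pmul (Pmul (Pmul (Pinv (beta d r)) (Pinv C)) (beta d r)) C.
    by apply: Pt_ext => m; rewrite /c /Pmul /Pinv /commg /conjg !mulgA.
  apply: L_mul; last exact: L_Citer.
  apply: L_mul; last exact: L_beta.
  by apply: L_mul; apply: L_inv; [exact: L_beta | exact: L_Citer].
have cA : forall m, c m \in ('Alt_('I_(d m)))%g.
  by move=> m; apply: groupR; [exact: beta_Alt | exact: Citer_Alt].
have c1 : forall m, (n < m)%N -> c m = 1%g.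
  by move=> m hm; apply/eqP/commgP; apply: comm_large.
pose y : Pt d := fun m => if (m < n)%N then c m else 1%g.
have Ly : Linf d r y.
  apply: (below IH).
  - by move=> m; rewrite /y; case: ifP => _ //; apply: group1.
  - by move=> m hm; rewrite /y ltnNge hm.
pose z := Pmul (Pinv y) c.
have Lz : Linf d r z by apply: L_mul => //; apply: L_inv.
have cS : c n \in Sn n.
  apply/SnP; exists z; split => //.
  - by rewrite /z /Pmul /Pinv /y ltnn invg1 mul1g.
  - move=> m hm; rewrite /z /Pmul /Pinv /y.
    case: (ltngtP m n) => h.
    + by rewrite mulVg.
    + by rewrite invg1 mul1g c1.
    + by rewrite h eqxx in hm.
have cne : c n != 1%g.
  by apply/negP => /commgP; apply: noncomm.
pose K := (SnG n :&: 'Alt_('I_(d n)))%G.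
have nK : (K <| 'Alt_('I_(d n)))%g.
  apply/andP; split; first exact: subsetIr.
  by apply: normsI; [exact: Alt_norm_Sn | exact: normG].
have hX : (5 <= #|'I_(d n)|)%N by rewrite card_ord; case: (d_prime n).
case/simpleP: (simple_Alt5 hX) => _ /(_ K nK) [K1|KA].
  have : c n \in K by rewrite inE cS cA.
  by rewrite K1 => /set1gP E; rewrite E eqxx in cne.
have : s \in K by rewrite KA.
by rewrite inE => /andP [/SnP].
Qed.

Lemma dsum_Linf x : in_dsumAlt x -> Linf d r x.
Proof.
case=> xA [N xN]; apply: (below (k := N)) => //.
by move=> m _ s sA; apply: Hall.
Qed.

Definition tau (x : Pt d) : Wt := epsilon (inhabits W1) (fun w => in_W w /\ ev x (Phi w)).

Lemma in_Wa : in_W Wa.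
Proof. by exists 0%N. Qed.

Lemma in_Wb0 : in_W Wb0.
Proof. by exists 0%N => i hi /=; case: eqP => // E; rewrite E in hi. Qed.

Lemma PhiV w : in_W w -> ev (Pinv (Phi w)) (Phi (Winv w)).
Proof.
move=> hw; have [N H] := Phi_hom hw (in_W_inv hw).
exists N => n hn; have := H n hn; rewrite Wmul_inv Phi_W1 /Pmul /Pinv /P1 => E.
by apply/eqP; rewrite eq_invg_mul -E.
Qed.

Lemma G_rep x : Ggen d r x -> exists w, in_W w /\ ev x (Phi w).
Proof.
move: x; apply: gen_min.
- split.
  + by exists W1; split; [exact: in_W1 | rewrite Phi_W1; exact: ev_refl].
  + move=> x y [w [hw ex]] [w' [hw' ey]]; exists (Wmul w w'); split; first exact: in_W_mul.
    exact: ev_trans (ev_mul ex ey) (ev_sym (Phi_hom hw hw')).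
  + move=> x [w [hw ex]]; exists (Winv w); split; first exact: in_W_inv.
    exact: ev_trans (ev_inv ex) (PhiV hw).
- move=> y [->|->].
  + by exists Wa; split; [exact: in_Wa | rewrite Phi_Wa; exact: ev_refl].
  + by exists Wb0; split; [exact: in_Wb0 | rewrite Phi_Wb0; exact: ev_refl].
Qed.

Lemma tau_spec x : Ggen d r x -> in_W (tau x) /\ ev x (Phi (tau x)).
Proof. by move/G_rep => H; exact: (epsilon_spec (inhabits W1) (fun w => in_W w /\ ev x (Phi w)) H). Qed.

Lemma tau_eq x w : Ggen d r x -> in_W w -> ev x (Phi w) -> tau x = w.
Proof.
move=> Gx hw ex; have [h1 h2] := tau_spec Gx.
by apply: Phi_inj h1 hw (ev_trans (ev_sym h2) ex).
Qed.

Lemma G_Alt x : Ggen d r x -> forall n, x n \in ('Alt_('I_(d n)))%g.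
Proof.
move: x; apply: gen_min.
- split.
  + by move=> n; apply: group1.
  + by move=> x y hx hy n; apply: groupM; [apply: hx | apply: hy].
  + by move=> x hx n; rewrite /Pinv groupV; apply: hx.
- by move=> y [->|->] n; [exact: alpha_Alt | exact: beta_Alt].
Qed.

Theorem main_thm : exists tau : Pt d -> Wt,
    [/\ (forall x y, Ggen d r x -> Ggen d r y ->
           tau (Pmul x y) = Wmul (tau x) (tau y)),
        (forall x, Ggen d r x -> in_W (tau x)),
        (forall w, in_W w -> exists2 x, Ggen d r x & tau x = w),
        tau (alpha d) = Wa /\ tau (beta d r) = Wb0 &
        (forall x, (Ggen d r x /\ tau x = W1) <-> in_dsumAlt x) /\
        (forall x, in_dsumAlt x -> Linf d r x)].
Proof.
exists tau; split.
- move=> x y Gx Gy; have [hx ex] := tau_spec Gx; have [hy ey] := tau_spec Gy.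
  apply: tau_eq; [exact: G_mul | exact: in_W_mul |].
  exact: ev_trans (ev_mul ex ey) (ev_sym (Phi_hom hx hy)).
- by move=> x /tau_spec [].
- move=> w hw.
  have [_ [x [Gx ex]]] : in_W w /\ exists x, Ggen d r x /\ ev x (Phi w).
    apply: (Wgen_all hw (S := fun w => in_W w /\ exists x, Ggen d r x /\ ev x (Phi w))).
    + split; first exact: in_Wa.
      by exists (alpha d); split; [exact: G_alpha | rewrite Phi_Wa; exact: ev_refl].
    + split; first exact: (in_W_inv in_Wa).
      exists (Pinv (alpha d)); split; first exact: (G_inv G_alpha).
      by rewrite -{1}Phi_Wa; apply: PhiV; exact: in_Wa.
    + split; first exact: in_Wb0.
      by exists (beta d r); split; [exact: G_beta | rewrite Phi_Wb0; exact: ev_refl].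
    + split; first exact: in_W1.
      by exists (P1 d); split; [exact: G_1 | rewrite Phi_W1; exact: ev_refl].
    + move=> u v [hu [x [Gx ex]]] [hv [y [Gy ey]]]; split; first exact: in_W_mul.
      exists (Pmul x y); split; first exact: G_mul.
      exact: ev_trans (ev_mul ex ey) (ev_sym (Phi_hom hu hv)).
  by exists x => //; apply: tau_eq.
- split.
  + by apply: tau_eq; [exact: G_alpha | exact: in_Wa | rewrite Phi_Wa; exact: ev_refl].
  + by apply: tau_eq; [exact: G_beta | exact: in_Wb0 | rewrite Phi_Wb0; exact: ev_refl].
- split; last exact: dsum_Linf.
  move=> x; split.
  + case=> Gx tx; split; first exact: G_Alt.
    have [_] := tau_spec Gx; rewrite tx Phi_W1 => [[N H]].
    by exists N.
  + move=> hx; have Gx := L_G (dsum_Linf hx); split => //.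
    apply: tau_eq => //; first exact: in_W1.
    by rewrite Phi_W1; case: hx => _ [N H]; exists N.
Qed.


End Main.

Local Close Scope ring_scope.

Theorem proposition3p5 (d r : nat -> nat)
  (d_mono : forall m n, m <= n -> d m <= d n)
  (d_prime : forall n, prime (d n) /\ 5 <= d n)
  (r_pos : forall n, 0 < r n)
  (r_incr : forall m n, m < n -> r m < r n)
  (dr : forall n, 3 * r n <= d n) :
  exists tau : Pt d -> Wt,
    [/\ (forall x y, Ggen d r x -> Ggen d r y ->
           tau (Pmul x y) = Wmul (tau x) (tau y)),
        (forall x, Ggen d r x -> in_W (tau x)),
        (forall w, in_W w -> exists2 x, Ggen d r x & tau x = w),
        tau (alpha d) = Wa /\ tau (beta d r) = Wb0 &
        (forall x, (Ggen d r x /\ tau x = W1) <-> in_dsumAlt x) /\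
        (forall x, in_dsumAlt x -> Linf d r x)].
Proof. by apply: main_thm. Qed.
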